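(* Let $G$ be a connected graph on vertex set $[n]=\{1,\dots,n\}$ and let $\pi$ be a permutation of $[n]$. If $C_1$ and $C_2$ are two distinct cycles of $\pi$ that are mutually routable in 2 steps, then $|C_1|=|C_2|$.
   Context: Routing via matchings: each vertex $i$ of $G$ initially holds a pebble, and the pebble initially on vertex $i$ must be moved to vertex $\pi(i)$. A step consists of choosing a matching of $G$ and swapping the pebbles at the two endpoints of every matched edge. A cycle of $\pi$ is identified with its set of vertices. Two cycles $C_1,C_2$ of $\pi$ are mutually routable in 2 steps if the pebbles initially on $C_1\cup C_2$ can all be brought to their destinations in at most 2 steps using only edges of $G$ with one endpoint in $C_1$ and the other in $C_2$. *)

(* Defs.v *)
From mathcomp Require Import all_boot all_fingroup.
Set Implicit Arguments. Unset Strict Implicit. Unset Printing Implicit Defensive.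

Definition simple_graph (T : finType) (e : rel T) : Prop :=
  symmetric e /\ irreflexive e.

Definition connected_graph (T : finType) (e : rel T) : Prop :=
  forall x y : T, connect e x y.

(* A matching M of G is represented by its partner map m : m x is the vertex
   matched to x, or x itself if x is unmatched.  Swapping pebbles along all
   edges of M moves the pebble at x to m x. *)
Definition matching_between (T : finType) (e : rel T) (C1 C2 : {set T})
  (m : T -> T) : Prop :=
  (forall x, m (m x) = x) /\
  (forall x, m x != x ->
     e x (m x) /\
     ((x \in C1) && (m x \in C2) || (x \in C2) && (m x \in C1))).

(* C1, C2 mutually routable in 2 steps: two matchings (possibly empty, so
   "at most 2 steps") using only C1--C2 edges of G bring every pebble
   starting on C1 u C2 to its destination. *)
Definition routable2 (T : finType) (e : rel T) (pi : {perm T})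
  (C1 C2 : {set T}) : Prop :=
  exists m1 m2 : T -> T,
    [/\ matching_between e C1 C2 m1, matching_between e C1 C2 m2 &
        forall x, x \in C1 :|: C2 -> m2 (m1 x) = pi x].

(* Main.v *)
Require Import Defs.
From mathcomp Require Import all_boot all_fingroup.

Section Aux.
Variable n : nat.
Implicit Types (pi : {perm 'I_n}) (C : {set 'I_n}).

Lemma orb_eq pi C x : C \in porbits pi -> x \in C -> C = porbit pi x.
Proof.
move=> /imsetP[a _ ->] xa; apply/esym/eqP; by rewrite eq_porbit_mem.
Qed.

Lemma orb_closed pi C x : C \in porbits pi -> x \in C -> pi x \in C.
Proof.
move=> HC xC; rewrite (@orb_eq pi C x HC xC).
by have := mem_porbit pi 1 x; rewrite expg1.
Qed.

Lemma orb_disj pi (C1 C2 : {set 'I_n}) x : C1 \in porbits pi -> C2 \in porbits pi ->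
  C1 != C2 -> x \in C1 -> x \in C2 -> False.
Proof.
move=> H1 H2 ne x1 x2; move/negP: ne; apply.
by rewrite (@orb_eq pi C1 x H1 x1) (@orb_eq pi C2 x H2 x2).
Qed.

Lemma orb_fix pi x : pi x = x -> porbit pi x = [set x].
Proof.
move=> fx; apply/setP=> y; rewrite in_set1; apply/porbitP/eqP=> [[i ->]|->].
  by elim: i => [|i IH]; rewrite ?expg0 ?perm1 // expgSr permM IH fx.
by exists 0; rewrite expg0 perm1.
Qed.

Lemma half_le (G : rel 'I_n) pi (C1 C2 : {set 'I_n}) :
  C1 \in porbits pi -> C2 \in porbits pi -> C1 != C2 ->
  routable2 G pi C1 C2 -> #|C1| <= #|C2|.
Proof.
move=> H1 H2 ne [m1 [m2 [[inv1 M1] [inv2 M2] R]]].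
have C2ne : 0 < #|C2|.
  case/imsetP: H2 => a _ ->; by rewrite lt0n card_porbit_neq0.
case: (boolP [exists x in C1, pi x == x]).
  case/exists_inP=> x xC /eqP fx.
  by rewrite (@orb_eq pi C1 x H1 xC) orb_fix // cards1.
move/exists_inPn=> nf.
have sub : m1 @: C1 \subset C2.
  apply/subsetP=> _ /imsetP[x xC ->].
  have xU : x \in C1 :|: C2 by rewrite inE xC.
  case: (eqVneq (m1 x) x) => e.
    exfalso; have := R x xU; rewrite e => E.
    have nx : m2 x != x by rewrite E; exact: nf.
    case: (M2 x nx) => _ /orP[/andP[_ h]|/andP[h _]].
      rewrite E in h; have K := orb_closed pi C1 x H1 xC. exact (orb_disj pi C1 C2 (pi x) H1 H2 ne K h).
    exact: (orb_disj _ _ _ _ H1 H2 ne xC h).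
  case: (M1 x e) => _ /orP[/andP[_ h]|/andP[h _]] //.
  exfalso; exact: (orb_disj _ _ _ _ H1 H2 ne xC h).
rewrite -(card_imset _ (can_inj inv1)).
exact: subset_leq_card.
Qed.
End Aux.

Theorem lemma1 (n : nat) (G : rel 'I_n) (pi : {perm 'I_n})
  (C1 C2 : {set 'I_n}) :
  simple_graph G -> connected_graph G ->
  C1 \in porbits pi -> C2 \in porbits pi -> C1 != C2 ->
  routable2 G pi C1 C2 ->
  #|C1| = #|C2|.
Proof.
move=> _ _ H1 H2 ne R; apply/eqP; rewrite eqn_leq (half_le _ _ _ _ _ H1 H2 ne R) /=.
apply: (half_le _ G _ _ _ H2 H1); first by rewrite eq_sym.
case: R => m1 [m2 [[i1 M1] [i2 M2] R]]; exists m1, m2; split.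
- split=> // x /M1[? h]; split=> //; by rewrite orbC.
- split=> // x /M2[? h]; split=> //; by rewrite orbC.
- by move=> x; rewrite setUC; exact: R.
Qed.
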